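(* If $f\colon A\to B$ is an anodyne extension of simplicial sets, then the map $\hat Cf\colon B\sqcup_A CA\to CB$ (induced by $j_B\colon B\to CB$ and $Cf\colon CA\to CB$) is a right anodyne extension.
   Context: An anodyne extension is a map of simplicial sets with the left lifting property with respect to all Kan fibrations. A right fibration is a map with the right lifting property with respect to all horn inclusions $\Lambda^k[n]\to\Delta[n]$ with $n\ge1$ and $0<k\le n$ ($\Lambda^k[n]$ the horn omitting the face opposite vertex $k$); a right anodyne extension is a map with the left lifting property with respect to all right fibrations. Cone construction: let $\Delta^-$ be the category of ordered sets $[n]=\{0,\dots,n\}$ for $n\ge-1$ ($[-1]=\emptyset$) and order-preserving maps; extend a simplicial set $A$ to $\Delta^-$ by $A_{-1}=$ a point. Let $C\Delta\colon\Delta^-\to$ (based simplicial sets) send $[n]$ to $\Delta[n+1]$ based at vertex $0$, and $f\colon[m]\to[n]$ to the map induced by $\bar f\colon[m+1]\to[n+1]$, $\bar f(0)=0$, $\bar f(k)=f(k-1)+1$ for $k>0$. Then $CA=\int^{n\in\Delta^-}A_n\times C\Delta[n]$ (adding a cone point to every simplex, all cone points identified to a base vertex). The natural inclusion $j_A\colon A\to CA$ is induced by $\delta_0\colon\Delta[n]\to\Delta[n+1]$, the inclusion of the face opposite $0$. *)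

(* Defs.v *)
From mathcomp Require Import all_boot.

Set Implicit Arguments.
Unset Strict Implicit.
Unset Printing Implicit Defensive.

Definition monob (m n : nat) (f : {ffun 'I_m.+1 -> 'I_n.+1}) : bool :=
  [forall i : 'I_m.+1, forall j : 'I_m.+1, (i <= j)%N ==> (f i <= f j)%N].

Definition mono (m n : nat) := {f : {ffun 'I_m.+1 -> 'I_n.+1} | monob f}.

Definition app (m n : nat) (t : mono m n) (i : 'I_m.+1) : 'I_n.+1 := val t i.

Lemma mono_le (m n : nat) (t : mono m n) (i j : 'I_m.+1) :
  (i <= j)%N -> (app t i <= app t j)%N.
Proof.
move=> hij; have := valP t; move/forallP/(_ i)/forallP/(_ j)/implyP; exact.
Qed.

Lemma mid_proof n : monob [ffun i : 'I_n.+1 => i].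
Proof. by apply/forallP => i; apply/forallP => j; rewrite !ffunE; apply/implyP. Qed.

Definition mid (n : nat) : mono n n := exist (fun f => monob f) _ (mid_proof n).

Lemma mcomp_proof (m n p : nat) (g : mono n p) (f : mono m n) :
  monob [ffun i => app g (app f i)].
Proof.
apply/forallP => i; apply/forallP => j; apply/implyP => hij; rewrite !ffunE.
by apply: mono_le; apply: mono_le.
Qed.

Definition mcomp (m n p : nat) (g : mono n p) (f : mono m n) : mono m p :=
  exist (fun f => monob f) _ (mcomp_proof g f).

Lemma mcomp_id_r m n (t : mono m n) : mcomp t (mid m) = t.
Proof. by apply: val_inj; apply/ffunP => i; rewrite /= !ffunE /app /= ffunE. Qed.

Lemma mcomp_assoc m n p q (h : mono p q) (g : mono n p) (f : mono m n) :
  mcomp h (mcomp g f) = mcomp (mcomp h g) f.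
Proof. by apply: val_inj; apply/ffunP => i; rewrite /= !ffunE /app /= !ffunE. Qed.

Record sset := SSet {
  sob :> nat -> Type;
  sact : forall m n : nat, mono m n -> sob n -> sob m;
  sact_id : forall n (x : sob n), sact (mid n) x = x;
  sact_comp : forall m n p (f : mono m n) (g : mono n p) (x : sob p),
      sact (mcomp g f) x = sact f (sact g x)
}.

Arguments sact {s m n} _ _.

Record smap (X Y : sset) := SMap {
  smfn :> forall n : nat, X n -> Y n;
  smnat : forall m n (f : mono m n) (x : X n),
      smfn (@sact X m n f x) = @sact Y m n f (smfn x)
}.

Arguments smfn {X Y} _ _ _.

Definition simplex (n : nat) : sset.
Proof.
refine (@SSet (fun m => mono m n) (fun m m' f t => mcomp t f) _ _).
- by move=> m t; exact: mcomp_id_r.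
- by move=> m m' p f g t; rewrite mcomp_assoc.
Defined.

(* an m-simplex t of Delta[n] lies in the horn Lambda^k[n] (the union of
   the faces opposite the vertices j <> k) iff it misses some vertex j <> k *)
Definition hornb (n : nat) (k : 'I_n.+1) (m : nat) (t : mono m n) : bool :=
  [exists j : 'I_n.+1, (j != k) && [forall i : 'I_m.+1, app t i != j]].

Lemma horn_act_proof n k m m' (f : mono m' m) (t : mono m n) :
  hornb k t -> hornb k (mcomp t f).
Proof.
case/existsP => j /andP [jk /forallP ht]; apply/existsP; exists j.
by rewrite jk /=; apply/forallP => i; rewrite /app /= ffunE; apply: ht.
Qed.

Definition horn (n : nat) (k : 'I_n.+1) : sset.
Proof.
refine (@SSet (fun m => {t : mono m n | hornb k t})
  (fun m m' f t => exist _ (mcomp (val t) f) (horn_act_proof f (valP t))) _ _).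
- by move=> m t; apply: val_inj; exact: mcomp_id_r.
- by move=> m m' p f g t; apply: val_inj; rewrite /= mcomp_assoc.
Defined.

Definition horn_incl (n : nat) (k : 'I_n.+1) : smap (horn k) (simplex n) :=
  @SMap (horn k) (simplex n) (fun m t => val t) (fun m m' f t => erefl).

Definition llp (A B X Y : sset) (i : smap A B) (p : smap X Y) : Prop :=
  forall (u : smap A X) (v : smap B Y),
    (forall n a, p n (u n a) = v n (i n a)) ->
    exists h : smap B X,
      (forall n a, h n (i n a) = u n a) /\ (forall n b, p n (h n b) = v n b).

Definition kan_fibration (X Y : sset) (p : smap X Y) : Prop :=
  forall (n : nat) (k : 'I_n.+1), (1 <= n)%N -> llp (horn_incl k) p.

Definition right_fibration (X Y : sset) (p : smap X Y) : Prop :=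
  forall (n : nat) (k : 'I_n.+1), (1 <= n)%N -> (0 < k)%N -> llp (horn_incl k) p.

Definition anodyne (A B : sset) (f : smap A B) : Prop :=
  forall (X Y : sset) (p : smap X Y), kan_fibration p -> llp f p.

Definition right_anodyne (A B : sset) (f : smap A B) : Prop :=
  forall (X Y : sset) (p : smap X Y), right_fibration p -> llp f p.

Definition is_pushout (A B C P : sset) (f : forall n, A n -> B n)
    (g : forall n, A n -> C n) (iB : smap B P) (iC : smap C P) : Prop :=
  (forall n a, iB n (f n a) = iC n (g n a)) /\
  forall (X : sset) (u : smap B X) (w : smap C X),
    (forall n a, u n (f n a) = w n (g n a)) ->
    exists k : smap P X,
      (forall n b, k n (iB n b) = u n b) /\ (forall n c, k n (iC n c) = w n c) /\
      forall k' : smap P X,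
        (forall n b, k' n (iB n b) = u n b) -> (forall n c, k' n (iC n c) = w n c) ->
        forall n x, k' n x = k n x.

(* Objects of Delta^- are [n], n >= -1.  C Delta[n] = Delta[n+1].
   For f : [k] -> [n] in Delta, fbar : [k+1] -> [n+1], 0 |-> 0,
   i |-> f(i-1)+1 for i > 0. *)
Definition fbar_fun (k n : nat) (f : mono k n) : {ffun 'I_k.+2 -> 'I_n.+2} :=
  [ffun i : 'I_k.+2 =>
     if (i : nat) == 0%N then ord0 else inord (app f (inord i.-1)).+1].

Lemma fbar_proof k n (f : mono k n) : monob (fbar_fun f).
Proof.
apply/forallP => i; apply/forallP => j; apply/implyP => hij; rewrite !ffunE.
case: eqP => [//|/eqP i0]; have j0 : (j : nat) != 0%N.
  by apply: contra i0 => /eqP j0; rewrite -leqn0 -j0.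
rewrite (negPf j0) !inordK ?ltnS; last 2 first.
- by have := ltn_ord (app f (inord j.-1)).
- by have := ltn_ord (app f (inord i.-1)).
have hi : (i.-1 < k.+1)%N by rewrite -ltnS prednK ?lt0n ?ltn_ord.
have hj : (j.-1 < k.+1)%N by rewrite -ltnS prednK ?lt0n ?ltn_ord.
apply: mono_le; rewrite !inordK //; by rewrite -!subn1 leq_sub2r.
Qed.

Definition fbar (k n : nat) (f : mono k n) : mono k.+1 n.+1 :=
  exist (fun f => monob f) _ (fbar_proof f).

(* for the (empty) map [-1] -> [n], the induced map [0] -> [n+1], 0 |-> 0 *)
Lemma cz_proof n : monob [ffun _ : 'I_1 => (ord0 : 'I_n.+2)].
Proof. by apply/forallP => i; apply/forallP => j; rewrite !ffunE; apply/implyP. Qed.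

Definition cz (n : nat) : mono 0 n.+1 := exist (fun f => monob f) _ (cz_proof n).

Lemma delta0_proof n : monob [ffun i : 'I_n.+1 => lift ord0 i].
Proof. by apply/forallP => i; apply/forallP => j; rewrite !ffunE; apply/implyP. Qed.

Definition delta0 (n : nat) : mono n n.+1 := exist (fun f => monob f) _ (delta0_proof n).

(* A cowedge from the functor (n, n') |-> A_n x C Delta[n'] on Delta^-
   (with A_{-1} = point) to X.  The component at [-1] is
   kp : Delta[0] -> X (since A_{-1} x C Delta[-1] = Delta[0]); the
   component at [n], n >= 0, is k n : A_n x Delta[n+1] -> X. *)
Definition is_cowedge (A X : sset) (kp : forall m, mono m 0 -> X m)
    (k : forall n m, A n -> mono m n.+1 -> X m) : Prop :=
  (forall m m' (g : mono m' m) (t : mono m 0), kp m' (mcomp t g) = sact g (kp m t)) /\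
  (forall n m m' (g : mono m' m) (a : A n) (t : mono m n.+1),
      k n m' a (mcomp t g) = sact g (k n m a t)) /\
  (forall k0 n (f : mono k0 n) m (a : A n) (t : mono m k0.+1),
      k k0 m (sact f a) t = k n m a (mcomp (fbar f) t)) /\
  (forall n m (a : A n) (t : mono m 0), kp m t = k n m a (mcomp (cz n) t)).

(* (CA, ip, i) is the coend CA = \int^{n in Delta^-} A_n x C Delta[n] *)
Definition is_cone (A CA : sset) (ip : forall m, mono m 0 -> CA m)
    (i : forall n m, A n -> mono m n.+1 -> CA m) : Prop :=
  is_cowedge ip i /\
  forall (X : sset) (kp : forall m, mono m 0 -> X m)
         (k : forall n m, A n -> mono m n.+1 -> X m),
    is_cowedge kp k ->
    exists g : smap CA X,
      (forall m t, g m (ip m t) = kp m t) /\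
      (forall n m a t, g m (i n m a t) = k n m a t) /\
      forall g' : smap CA X,
        (forall m t, g' m (ip m t) = kp m t) ->
        (forall n m a t, g' m (i n m a t) = k n m a t) ->
        forall m x, g' m x = g m x.

(* j_A : A -> CA, induced by delta_0 : Delta[n] -> Delta[n+1]: an
   n-simplex a of A goes to the class of (a, delta_0). *)
Definition cone_incl (A CA : sset) (i : forall n m, A n -> mono m n.+1 -> CA m) :
  forall n, A n -> CA n := fun n a => i n n a (delta0 n).

(* Main.v *)
Require Import Defs.
From mathcomp Require Import all_boot.
From Stdlib Require Import ProofIrrelevance.
From mathcomp Require Import zify.

Set Implicit Arguments.
Unset Strict Implicit.
Unset Printing Implicit Defensive.

Lemma sig_eq (T : Type) (P : T -> Prop) (a b : {x | P x}) :
  proj1_sig a = proj1_sig b -> a = b.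
Proof.
case: a => a pa; case: b => b pb /= eab; subst b; f_equal; apply: proof_irrelevance.
Qed.

Lemma mono_ext m n (s t : mono m n) : (forall i, (app s i : nat) = app t i) -> s = t.
Proof. move=> h; apply: val_inj; apply/ffunP => i; apply: val_inj; exact: h. Qed.

Lemma mk_proof m n (f : 'I_m.+1 -> 'I_n.+1)
  (H : forall i j : 'I_m.+1, (i <= j)%N -> (f i <= f j)%N) : monob [ffun i => f i].
Proof. by apply/forallP => i; apply/forallP => j; apply/implyP => hij; rewrite !ffunE H. Qed.

Definition mk m n (f : 'I_m.+1 -> 'I_n.+1)
  (H : forall i j : 'I_m.+1, (i <= j)%N -> (f i <= f j)%N) : mono m n :=
  exist (fun f => monob f) _ (mk_proof H).

Lemma mkE m n f H i : app (@mk m n f H) i = f i.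
Proof. by rewrite /app /= ffunE. Qed.

Lemma mcompE m n p (g : mono n p) (f : mono m n) i : app (mcomp g f) i = app g (app f i).
Proof. by rewrite /app /= ffunE. Qed.

Lemma midE n i : app (mid n) i = i.
Proof. by rewrite /app /= ffunE. Qed.

Lemma czE n i : (app (cz n) i : nat) = 0.
Proof. by rewrite /app /= ffunE. Qed.

Lemma delta0E n i : (app (delta0 n) i : nat) = i.+1.
Proof. by rewrite /app /= ffunE. Qed.

Lemma fbarE k n (f : mono k n) i :
  (app (fbar f) i : nat) = if (i : nat) == 0 then 0 else (app f (inord i.-1)).+1.
Proof.
rewrite /app /= ffunE; case: eqP => // _; rewrite inordK // ltnS.
exact: (ltn_ord (val f _)).
Qed.

Lemma mcomp_id_l m n (t : mono m n) : mcomp (mid n) t = t.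
Proof. by apply: mono_ext => i; rewrite mcompE midE. Qed.

Lemma mono0_eq m (s t : mono m 0) : s = t.
Proof.
apply: mono_ext => i; have := ltn_ord (app s i); have := ltn_ord (app t i).
by rewrite !ltnS !leqn0 => /eqP -> /eqP ->.
Qed.

Lemma fbar_id n : fbar (mid n) = mid n.+1.
Proof.
apply: mono_ext => i; rewrite fbarE !midE; case: eqP => [->//|/eqP i0].
rewrite inordK ?prednK ?lt0n //.
by have := ltn_ord i; lia.
Qed.

Lemma fbar_comp m n p (g : mono n p) (f : mono m n) :
  fbar (mcomp g f) = mcomp (fbar g) (fbar f).
Proof.
apply: mono_ext => i; rewrite mcompE fbarE [in RHS]fbarE fbarE; case: eqP => // _.
by rewrite /= mcompE inord_val.
Qed.

Lemma fbar_cz k n (f : mono k n) : mcomp (fbar f) (cz k) = cz n.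
Proof. by apply: mono_ext => i; rewrite mcompE fbarE !czE. Qed.

Lemma fbar_delta0 k n (f : mono k n) : mcomp (fbar f) (delta0 k) = mcomp (delta0 n) f.
Proof.
apply: mono_ext => i; rewrite !mcompE fbarE !delta0E /=.
by congr (_.+1); congr (val (app f _)); apply: val_inj; rewrite /= inordK.
Qed.

Lemma ord_eq n (a b : 'I_n) : (a : nat) = b -> a = b.
Proof. exact: val_inj. Qed.

Lemma mono_le0 m n (t : mono m n) (i : 'I_m.+1) : (app t ord0 <= app t i)%N.
Proof. exact: (@mono_le m n t ord0 i (leq0n i)). Qed.

Definition sz m (z : nat) : mono m m.+1.
refine (@mk m m.+1 (fun i => if (i < z)%N then ord0 else lift ord0 i) _).
move=> i j hij; case: (ltnP i z); case: (ltnP j z) => hj hi /=; rewrite /bump ?leq0n /=; lia.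
Defined.

Lemma szE m z i : (app (sz m z) i : nat) = if (i < z)%N then 0 else i.+1.
Proof. by rewrite /sz mkE; case: ifP. Qed.

Definition rz m (z : nat) : mono m m.
refine (@mk m m (fun i => inord (maxn i (minn z m))) _).
move=> i j hij; rewrite !inordK; [lia | |]; have := ltn_ord i; have := ltn_ord j; lia.
Defined.

Lemma rzE m z i : (app (rz m z) i : nat) = maxn i (minn z m).
Proof. rewrite /rz mkE inordK //; have := ltn_ord i; lia. Qed.

Definition minus1 m n (t : mono m n.+1) : mono m n.
refine (@mk m n (fun i => inord (app t i).-1) _).
move=> i j hij; have h1 := mono_le t hij; have h2 := ltn_ord (app t i); have h3 := ltn_ord (app t j).
rewrite !inordK; lia.
Defined.

Lemma minus1E m n (t : mono m n.+1) i : (app (minus1 t) i : nat) = (app t i).-1.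
Proof. rewrite /minus1 mkE inordK //; have := ltn_ord (app t i); lia. Qed.

Definition bang m : mono m 0.
refine (@mk m 0 (fun _ => ord0) _). by [].
Defined.

Lemma minus1_comp m m' n (t : mono m n.+1) (g : mono m' m) :
  minus1 (mcomp t g) = mcomp (minus1 t) g.
Proof. by apply: mono_ext => i; rewrite mcompE !minus1E mcompE. Qed.

Definition zc m n (t : mono m n) : nat :=
  \max_(i : 'I_m.+1 | (app t i : nat) == 0) i.+1.

Lemma zcP m n (t : mono m n) i : ((app t i : nat) == 0) = (i < zc t).
Proof.
apply/idP/idP => [h|h].
  exact: (@leq_bigmax_cond _ (fun i : 'I_m.+1 => (app t i : nat) == 0) (fun i : 'I_m.+1 => i.+1) i h).
apply/negPn/negP => hn; move: h; rewrite ltnNge; apply/negP/negPn.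
apply/bigmax_leqP => j hj; rewrite ltnNge; apply/negP => hij.
by have := mono_le t hij; rewrite (eqP hj) leqn0 (negPf hn).
Qed.

Lemma zc_le m n (t : mono m n) : (zc t <= m.+1)%N.
Proof. by apply/bigmax_leqP => j _; exact: ltn_ord. Qed.

Section Slice.
Variables (X Y : sset) (p : smap X Y) (x0 : X 0) (y0 : Y 0).
Hypothesis hx0 : p 0 x0 = y0.

Definition Eob (m : nat) := {s : X m.+1 | sact (cz m) s = x0}.

Lemma Eact_proof m n (g : mono m n) (s : Eob n) :
  sact (cz m) (sact (fbar g) (proj1_sig s)) = x0.
Proof. by rewrite -sact_comp fbar_cz (proj2_sig s). Qed.

Definition Eact m n (g : mono m n) (s : Eob n) : Eob m :=
  exist _ _ (Eact_proof g s).

Definition E : sset.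
refine (@SSet Eob Eact _ _).
- by move=> n x; apply: sig_eq; rewrite /= fbar_id sact_id.
- by move=> m n r f g x; apply: sig_eq; rewrite /= fbar_comp sact_comp.
Defined.

Definition Fob (m : nat) :=
  {xt : X m * Y m.+1 | sact (cz m) xt.2 = y0 /\ p m xt.1 = sact (delta0 m) xt.2}.

Lemma Fact_proof m n (g : mono m n) (s : Fob n) :
  sact (cz m) (sact (fbar g) (proj1_sig s).2) = y0 /\
  p m (sact g (proj1_sig s).1) = sact (delta0 m) (sact (fbar g) (proj1_sig s).2).
Proof.
case: s => [[a b] [h1 h2]] /=; split; first by rewrite -sact_comp fbar_cz.
by rewrite smnat h2 -!sact_comp fbar_delta0.
Qed.

Definition Fact m n (g : mono m n) (s : Fob n) : Fob m :=
  exist _ (sact g (proj1_sig s).1, sact (fbar g) (proj1_sig s).2) (Fact_proof g s).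

Definition F : sset.
refine (@SSet Fob Fact _ _).
- by move=> n [[a b] h]; apply: sig_eq; rewrite /= fbar_id !sact_id.
- by move=> m n r f g [[a b] h]; apply: sig_eq; rewrite /= fbar_comp !sact_comp.
Defined.

Lemma qproof m (s : Eob m) :
  sact (cz m) (p m.+1 (proj1_sig s)) = y0 /\
  p m (sact (delta0 m) (proj1_sig s)) = sact (delta0 m) (p m.+1 (proj1_sig s)).
Proof. by split; rewrite -smnat // (proj2_sig s). Qed.

Definition qfun m (s : Eob m) : Fob m :=
  exist _ (sact (delta0 m) (proj1_sig s), p m.+1 (proj1_sig s)) (qproof s).

Definition q : smap E F.
refine (@SMap E F qfun _).
by move=> m n g s; apply: sig_eq; rewrite /= -!sact_comp fbar_delta0 smnat.
Defined.


Hypothesis rf : right_fibration p.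

Section Kan.
Variables (n : nat) (k : 'I_n.+1).
Hypothesis hn : (0 < n)%N.
Variables (al : smap (horn k) E) (be : smap (simplex n) F).
Hypothesis hab : forall m a, q m (al m a) = be m (horn_incl k m a).

Definition xi : X n := (proj1_sig (be n (mid n))).1.
Definition tau : Y n.+1 := (proj1_sig (be n (mid n))).2.

Lemma beE m t : proj1_sig (be m t) = (sact t xi, sact (fbar t) tau).
Proof. by have := smnat be t (mid n); rewrite /= mcomp_id_l => ->. Qed.

Lemma tau_cz : sact (cz n) tau = y0.
Proof. exact: (proj2_sig (be n (mid n))).1. Qed.

Lemma xi_tau : p n xi = sact (delta0 n) tau.
Proof. exact: (proj2_sig (be n (mid n))).2. Qed.

Definition at_ m (u : mono m n) : X m.+1 :=
  (if hornb k u as b return hornb k u = b -> X m.+1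
   then fun h => proj1_sig (al m (exist (fun t : mono m n => hornb k t) u h : horn k m))
   else fun _ => sact (bang m.+1) x0) erefl.

Lemma atE m u (h : hornb k u) :
  at_ u = proj1_sig (al m (exist (fun t : mono m n => hornb k t) u h : horn k m)).
Proof.
rewrite /at_.
suff H : forall b (e : hornb k u = b),
  (if b as b0 return hornb k u = b0 -> X m.+1
   then fun h => proj1_sig (al m (exist (fun t : mono m n => hornb k t) u h : horn k m))
   else fun _ => sact (bang m.+1) x0) e =
  proj1_sig (al m (exist (fun t : mono m n => hornb k t) u h : horn k m)) by apply: H.
case=> e; last by rewrite h in e.
by rewrite (bool_irrelevance e h).
Qed.

Lemma at_nat m m' (u : mono m n) (g : mono m' m) :
  hornb k u -> at_ (mcomp u g) = sact (fbar g) (at_ u).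
Proof.
move=> h; rewrite (atE h) (atE (horn_act_proof g h)).
have e := smnat al g (exist (fun t : mono m n => hornb k t) u h : horn k m).
simpl in e.
by rewrite (bool_irrelevance (horn_act_proof g h)
  (horn_act_proof g (valP (exist (fun t : mono m n => hornb k t) u h)))) e.
Qed.

Lemma at_cz m (u : mono m n) : sact (cz m) (at_ u) = x0.
Proof.
case: (boolP (hornb k u)) => h.
  by rewrite (atE h); exact: (proj2_sig (al m _)).
rewrite /at_; move: (erefl (hornb k u)).
suff H : forall b (e : hornb k u = b), b = false ->
  sact (cz m) ((if b as b0 return hornb k u = b0 -> X m.+1
   then fun h => proj1_sig (al m (exist (fun t : mono m n => hornb k t) u h : horn k m))
   else fun _ => sact (bang m.+1) x0) e) = x0.
  by move=> e; apply: H; exact: negbTE.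
case=> e hb; first discriminate hb.
rewrite /= -sact_comp.
by rewrite (mono0_eq (mcomp (bang m.+1) (cz m)) (mid 0)) sact_id.
Qed.

Lemma at_d0 m (u : mono m n) : hornb k u -> sact (delta0 m) (at_ u) = sact u xi.
Proof.
move=> h; rewrite (atE h).
have := hab (exist (fun t : mono m n => hornb k t) u h : horn k m).
move/(f_equal (fun s => (proj1_sig s).1)); rewrite /= => ->.
by rewrite beE.
Qed.

Lemma at_p m (u : mono m n) : hornb k u -> p m.+1 (at_ u) = sact (fbar u) tau.
Proof.
move=> h; rewrite (atE h).
have := hab (exist (fun t : mono m n => hornb k t) u h : horn k m).
move/(f_equal (fun s => (proj1_sig s).2)); rewrite /= => ->.
by rewrite beE.
Qed.


Definition K : 'I_n.+2 := lift ord0 k.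

Lemma KE : (K : nat) = k.+1.
Proof. by rewrite /K /= /bump leq0n. Qed.

Definition tpr m (t : mono m n.+1) : mono m n := minus1 (mcomp t (rz m (zc t))).

Lemma tprE m (t : mono m n.+1) i : (app (tpr t) i : nat) = (app t (app (rz m (zc t)) i) : nat).-1.
Proof. by rewrite minus1E mcompE. Qed.

Lemma rz_ge m z (i : 'I_m.+1) : (z <= i)%N -> app (rz m z) i = i.
Proof. move=> h; apply: ord_eq; rewrite /= rzE; have := ltn_ord i; lia. Qed.

Lemma rz_ge' m z (i : 'I_m.+1) : (z <= m)%N -> (z <= app (rz m z) i)%N.
Proof. move=> h; rewrite rzE; lia. Qed.

Definition U' m (t : mono m n.+1) : X m :=
  if (app t ord0 : nat) == 0 then sact (sz m (zc t)) (at_ (tpr t))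
  else sact (minus1 t) xi.

Lemma tpr_horn m (t : mono m n.+1) :
  hornb K t -> (0 < zc t)%N -> (zc t <= m)%N -> hornb k (tpr t).
Proof.
case/existsP => j /andP [jK /forallP hj] z0 zm.
have t0 : (app t ord0 : nat) == 0 by rewrite zcP.
have j0 : (j : nat) != 0.
  apply/eqP => e; move/eqP: (hj ord0); apply; apply: ord_eq; rewrite e; exact/eqP.
have jn := ltn_ord j.
apply/existsP; exists (inord j.-1); apply/andP; split.
  apply/eqP => e; move/eqP: jK; apply; apply: ord_eq; rewrite KE -e inordK; lia.
apply/forallP => i; apply/eqP => e; move: (congr1 val e); rewrite /= tprE inordK; last by lia.
set r := app (rz m (zc t)) i.
have : (app t r : nat) != 0 by rewrite zcP -leqNgt rz_ge'.
move=> tr e2; move/eqP: (hj r); apply; apply: ord_eq; lia.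
Qed.

Lemma sz_all m z : (m < z)%N -> sz m z = mcomp (cz m) (bang m).
Proof. move=> h; apply: mono_ext => i; rewrite szE mcompE czE ifT //; have := ltn_ord i; lia. Qed.

Lemma sact_zero m z (y : X m.+1) :
  (m < z)%N -> sact (cz m) y = x0 -> sact (sz m z) y = sact (bang m) x0.
Proof. by move=> h hy; rewrite sz_all // sact_comp hy. Qed.

Lemma Zlem m z (u1 u2 : mono m n) : hornb k u1 -> hornb k u2 -> (z <= m)%N ->
  (forall i : 'I_m.+1, (z <= i)%N -> (app u1 i : nat) = app u2 i) ->
  sact (sz m z) (at_ u1) = sact (sz m z) (at_ u2).
Proof.
move=> h1 h2 zm hu.
have e : sz m z = mcomp (fbar (rz m z)) (sz m z).
  apply: mono_ext => i; rewrite mcompE fbarE szE; case: (ltnP i z) => hi.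
    by [].
  rewrite /= inord_val rzE; have := ltn_ord i; lia.
rewrite e !sact_comp -!at_nat //; congr (sact _ (at_ _)).
apply: mono_ext => i; rewrite !mcompE; apply: hu; exact: rz_ge'.
Qed.

Lemma U_nat m m' (t : mono m n.+1) (g : mono m' m) :
  hornb K t -> U' (mcomp t g) = sact g (U' t).
Proof.
move=> ht; rewrite /U' mcompE.
have hg0 := mono_le0 t (app g ord0).
case: (eqVneq (app t ord0 : nat) 0) => t0; last first.
  have -> : ((app t (app g ord0) : nat) == 0) = false.
    by apply/negbTE; move: t0 hg0; rewrite -!lt0n; lia.
  by rewrite minus1_comp sact_comp.
have z0 : (0 < zc t)%N by move: (zcP t ord0); rewrite t0 eqxx => <-.
case: (eqVneq (app t (app g ord0) : nat) 0) => tg0; last first.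
  have gz : forall i, (zc t <= app g i)%N.
    move=> i; rewrite leqNgt -zcP; have := mono_le t (mono_le0 g i).
    by move: tg0; rewrite -!lt0n; lia.
  have zm : (zc t <= m)%N by have := gz ord0; have := ltn_ord (app g ord0); lia.
  have hp := tpr_horn ht z0 zm.
  have e : mcomp (sz m (zc t)) g = mcomp (delta0 m) g.
    by apply: mono_ext => i; rewrite !mcompE szE delta0E ltnNge gz.
  rewrite -sact_comp e sact_comp at_d0 // -sact_comp; congr (sact _ xi).
  by apply: mono_ext => i; rewrite minus1E !mcompE tprE rz_ge.
have ez : forall i, (app g i < zc t)%N = (i < zc (mcomp t g))%N.
  by move=> i; rewrite -!zcP mcompE.
have e : mcomp (sz m (zc t)) g = mcomp (fbar g) (sz m' (zc (mcomp t g))).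
  apply: mono_ext => i; rewrite !mcompE fbarE !szE ez; case: ltnP => //= hi.
  by rewrite inord_val.
rewrite -sact_comp e sact_comp.
have z'0 : (0 < zc (mcomp t g))%N by move: (zcP (mcomp t g) ord0); rewrite mcompE tg0 eqxx => <-.
case: (ltnP m' (zc (mcomp t g))) => hz'.
  rewrite !(sact_zero hz') //; first by rewrite -sact_comp fbar_cz at_cz.
  exact: at_cz.
have zm : (zc t <= m)%N.
  have h := ez ord_max; simpl in h; rewrite (ltnNge m') hz' /= in h.
  move/negbT: h; rewrite -leqNgt => h.
  by have := ltn_ord (app g ord_max); lia.
rewrite -at_nat; last exact: tpr_horn ht z0 zm.
apply: Zlem => //.
- exact: tpr_horn (horn_act_proof g ht) z'0 hz'.
- apply: horn_act_proof. exact: (tpr_horn ht z0 zm).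
- move=> i hi; rewrite tprE rz_ge // !mcompE tprE rz_ge //.
  by rewrite leqNgt ez -leqNgt.
Qed.

Lemma U_p m (t : mono m n.+1) : hornb K t -> p m (U' t) = sact t tau.
Proof.
move=> ht; rewrite /U'; case: (eqVneq (app t ord0 : nat) 0) => t0.
  have z0 : (0 < zc t)%N by move: (zcP t ord0); rewrite t0 eqxx => <-.
  case: (ltnP m (zc t)) => hz.
    rewrite (sz_all hz) sact_comp at_cz smnat hx0.
    have -> : t = mcomp (cz n) (bang m).
      apply: mono_ext => i; rewrite mcompE czE; apply/eqP; rewrite zcP.
      by have := ltn_ord i; lia.
    by rewrite sact_comp tau_cz.
  rewrite smnat at_p; last exact: tpr_horn.
  rewrite -sact_comp; congr (sact _ tau).
  apply: mono_ext => i; rewrite mcompE fbarE szE; case: ltnP => hi.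
    by apply/esym/eqP; rewrite zcP.
  have ti : (app t i : nat) != 0 by rewrite zcP -leqNgt.
  rewrite /= inord_val tprE rz_ge //.
  by rewrite prednK // lt0n.
rewrite smnat xi_tau -sact_comp; congr (sact _ tau).
apply: mono_ext => i; rewrite mcompE delta0E minus1E.
have := mono_le0 t i; move: t0; rewrite -!lt0n => t0 ti.
by rewrite prednK //; lia.
Qed.


Definition Uh : smap (horn K) X.
refine (@SMap (horn K) X (fun m w => U' (proj1_sig w)) _).
by move=> m m' g w; exact: U_nat (proj2_sig w).
Defined.

Definition Vh : smap (simplex n.+1) Y.
refine (@SMap (simplex n.+1) Y (fun m t => sact t tau) _).
by move=> m m' g t; rewrite /= sact_comp.
Defined.

Lemma hUV m a : p m (Uh m a) = Vh m (horn_incl K m a).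
Proof. exact: U_p (proj2_sig a). Qed.

Lemma cz_horn : hornb K (cz n).
Proof.
apply/existsP; exists (if k == ord_max then inord 1 else ord_max).
have kn := ltn_ord k.
case: (eqVneq k ord_max) => hk; apply/andP; split.
- apply/eqP => e; move: (congr1 (@nat_of_ord _) e); rewrite KE hk /= inordK; lia.
- by apply/forallP => i; apply/eqP => e; move: (congr1 (@nat_of_ord _) e); rewrite czE inordK; lia.
- apply/eqP => e; move: (congr1 (@nat_of_ord _) e); rewrite KE /= => e2.
  by move/eqP: hk; apply; apply: ord_eq; rewrite /=; lia.
- by apply/forallP => i; apply/eqP => e; move: (congr1 (@nat_of_ord _) e); rewrite czE.
Qed.

Lemma fbar_horn m (u : mono m n) : hornb k u -> hornb K (fbar u).
Proof.
case/existsP => j /andP [jk /forallP hj]; apply/existsP; exists (lift ord0 j).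
apply/andP; split.
  apply/eqP => e; move: (congr1 (@nat_of_ord _) e); rewrite KE /= /bump !leq0n /= => e2.
  by move/eqP: jk; apply; apply: ord_eq; lia.
apply/forallP => i; apply/eqP => e; move: (congr1 (@nat_of_ord _) e); rewrite fbarE /= /bump leq0n /=.
case: eqP => // _ [] e2; move/eqP: (hj (inord i.-1)); apply; exact: ord_eq.
Qed.

Lemma d0_horn m (u : mono m n) : hornb K (mcomp (delta0 n) u).
Proof.
apply/existsP; exists ord0; apply/andP; split.
  by apply/eqP => e; move: (congr1 (@nat_of_ord _) e); rewrite KE.
by apply/forallP => i; apply/eqP => e; move: (congr1 (@nat_of_ord _) e); rewrite mcompE delta0E.
Qed.

Lemma zc_one m (t : mono m n.+1) : (app t ord0 : nat) = 0 ->
  (forall i : 'I_m.+1, (0 < i)%N -> (app t i : nat) != 0) -> zc t = 1.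
Proof.
move=> t0 h; apply/eqP; rewrite eqn_leq; apply/andP; split; last first.
  by move: (zcP t ord0); rewrite t0 eqxx => <-.
apply/bigmax_leqP => j hj; case: (posnP j) => [->//|jp].
by rewrite (negbTE (h j jp)) in hj.
Qed.

Section Lift.
Variable W : smap (simplex n.+1) X.
Hypothesis hW1 : forall m a, W m (horn_incl K m a) = Uh m a.
Hypothesis hW2 : forall m b, p m (W m b) = Vh m b.

Lemma W_horn m (t : mono m n.+1) (h : hornb K t) : W m t = U' t.
Proof. exact: (hW1 (exist (fun t => hornb K t) t h : horn K m)). Qed.

Lemma U_cz : U' (cz n) = x0.
Proof.
rewrite /U' czE eqxx (@zc_one 0 (cz n)) ?czE //; last by move=> [[|j] hj].
have -> : sz 0 1 = cz 0 by apply: mono_ext => i; rewrite szE czE (ltn_ord i).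
exact: at_cz.
Qed.

Lemma g_proof m (t : mono m n) : sact (cz m) (W m.+1 (fbar t)) = x0.
Proof. by rewrite -(smnat W) /= fbar_cz (W_horn cz_horn) U_cz. Qed.

Definition gam : smap (simplex n) E.
refine (@SMap (simplex n) E
  (fun m t => exist (fun s => sact (cz m) s = x0) (W m.+1 (fbar t)) (g_proof t) : E m) _).
move=> m m' g t; apply: sig_eq => /=; rewrite fbar_comp; exact: (smnat W (fbar g) (fbar t)).
Defined.

Lemma gam_incl m a : gam m (horn_incl k m a) = al m a.
Proof.
apply: sig_eq; case: a => u h /=.
rewrite (W_horn (fbar_horn h)) -(atE h).
have z1 : zc (fbar u) = 1.
  apply: zc_one; first by rewrite fbarE.
  by move=> i ip; rewrite fbarE (gtn_eqF ip).
rewrite /U' fbarE /= z1.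
have e1 : tpr (fbar u) = mcomp u (minus1 (mid m.+1)).
  apply: mono_ext => i; rewrite tprE z1 fbarE rzE mcompE ifF; last by lia.
  rewrite /=; congr (nat_of_ord (app u _)); apply: ord_eq.
  rewrite minus1E midE inordK; first lia.
  have := ltn_ord i; lia.
rewrite e1 at_nat // -sact_comp.
have e2 : mcomp (fbar (minus1 (mid m.+1))) (sz m.+1 1) = mid m.+1.
  apply: mono_ext => i; rewrite mcompE fbarE szE midE; case: ltnP => hi /=.
    lia.
  rewrite inord_val minus1E midE; lia.
by rewrite e2 sact_id.
Qed.

Lemma gam_q m t : q m (gam m t) = be m t.
Proof.
apply: sig_eq; rewrite beE /=; congr (_, _).
  rewrite -(smnat W) /= fbar_delta0 (W_horn (d0_horn t)) /U' mcompE delta0E /=.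
  by congr (sact _ xi); apply: mono_ext => i; rewrite minus1E mcompE delta0E.
by rewrite hW2.
Qed.

End Lift.

Lemma kan_step : exists h : smap (simplex n) E,
  (forall m a, h m (horn_incl k m a) = al m a) /\ (forall m b, q m (h m b) = be m b).
Proof.
have K0 : (0 < K)%N by rewrite KE.
have [W [h1 h2]] := rf (ltn0Sn n) K0 hUV.
by exists (gam h1); split; [exact: gam_incl | exact: gam_q].
Qed.

End Kan.

Lemma q_kan : kan_fibration q.
Proof. move=> n k hn al be hab; exact: kan_step. Qed.

End Slice.

Definition scomp (X Y Z : sset) (g : smap Y Z) (f : smap X Y) : smap X Z.
refine (@SMap X Z (fun n x => g n (f n x)) _).
by move=> m n t x; rewrite !smnat.
Defined.

Lemma cowedge_map (A X Y : sset) (kp : forall m, mono m 0 -> X m)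
    (k : forall n m, A n -> mono m n.+1 -> X m) (phi : smap X Y) :
  is_cowedge kp k ->
  is_cowedge (fun m t => phi m (kp m t)) (fun n m a t => phi m (k n m a t)).
Proof.
case=> [h1 [h2 [h3 h4]]]; split; [|split; [|split]].
- by move=> m m' g t; rewrite h1 smnat.
- by move=> n m m' g a t; rewrite h2 smnat.
- by move=> k0 n f m a t; rewrite h3.
- by move=> n m a t; rewrite (h4 n m a t).
Qed.

Lemma cone_uniq (A CA : sset) (ip : forall m, mono m 0 -> CA m)
    (i : forall n m, A n -> mono m n.+1 -> CA m) (X : sset)
    (kp : forall m, mono m 0 -> X m) (k : forall n m, A n -> mono m n.+1 -> X m) :
  is_cone ip i -> is_cowedge kp k ->
  forall g1 g2 : smap CA X,
  (forall m t, g1 m (ip m t) = kp m t) -> (forall n m a t, g1 m (i n m a t) = k n m a t) ->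
  (forall m t, g2 m (ip m t) = kp m t) -> (forall n m a t, g2 m (i n m a t) = k n m a t) ->
  forall m x, g1 m x = g2 m x.
Proof.
case=> _ univ hc g1 g2 a1 b1 a2 b2 m x.
have [g [_ [_ gu]]] := univ X kp k hc.
by rewrite (gu g1 a1 b1) (gu g2 a2 b2).
Qed.

Theorem theorem4p7
  (A B : sset) (f : smap A B)
  (CA : sset) (iAp : forall m, mono m 0 -> CA m)
  (iA : forall n m, A n -> mono m n.+1 -> CA m)
  (CB : sset) (iBp : forall m, mono m 0 -> CB m)
  (iB : forall n m, B n -> mono m n.+1 -> CB m) :
  anodyne f ->
  is_cone iAp iA ->
  is_cone iBp iB ->
  forall Cf : smap CA CB,
  (* Cf = C f : CA -> CB, induced by f x id *)
  (forall m t, Cf m (iAp m t) = iBp m t) ->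
  (forall n m a t, Cf m (iA n m a t) = iB n m (f n a) t) ->
  forall (P : sset) (inB : smap B P) (inC : smap CA P),
  (* P = B \sqcup_A CA, pushout of f and j_A *)
  is_pushout f (cone_incl iA) inB inC ->
  forall hatCf : smap P CB,
  (forall m b, hatCf m (inB m b) = cone_incl iB b) ->
  (forall m c, hatCf m (inC m c) = Cf m c) ->
  right_anodyne hatCf.
Proof.
move=> anod coneA coneB Cf hCf1 hCf2 P inB inC [pcomm puniv] hatCf hh1 hh2.
move=> X Y p rf u v huv.
have coneA' := coneA; have coneB' := coneB.
case: coneA' => [[natpA [natkA [dinfA dinczA]]] _].
case: coneB' => [[natpB [natkB [dinfB dinczB]]] _].
set x0 := u 0 (inC 0 (iAp 0 (mid 0))).
set y0 := v 0 (iBp 0 (mid 0)).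
have hx0 : p 0 x0 = y0 by rewrite /x0 /y0 huv hh2 hCf1.
have a_proof : forall n (al : A n),
    sact (cz n) (u n.+1 (inC n.+1 (iA n n.+1 al (mid n.+1)))) = x0.
  move=> n al; rewrite -!smnat -natkA mcomp_id_l /x0.
  by rewrite (dinczA n 0 al (mid 0)) mcomp_id_r.
pose amap := fun n (al : A n) =>
  exist (fun s => sact (cz n) s = x0) _ (a_proof n al) : E x0 n.
have a_nat : forall m n (g : mono m n) (al : A n), amap m (sact g al) = sact g (amap n al).
  move=> m n g al; apply: sig_eq => /=.
  by rewrite -!smnat -natkA dinfA mcomp_id_l mcomp_id_r.
pose a := @SMap A (E x0) amap a_nat.
have b_proof : forall n (be : B n),
    sact (cz n) (v n.+1 (iB n n.+1 be (mid n.+1))) = y0 /\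
    p n (u n (inB n be)) = sact (delta0 n) (v n.+1 (iB n n.+1 be (mid n.+1))).
  move=> n be; split.
    rewrite -!smnat -natkB mcomp_id_l /y0.
    by rewrite (dinczB n 0 be (mid 0)) mcomp_id_r.
  by rewrite huv hh1 -smnat -natkB mcomp_id_l.
pose bmap := fun n (be : B n) =>
  exist (fun xt : X n * Y n.+1 => sact (cz n) xt.2 = y0 /\ p n xt.1 = sact (delta0 n) xt.2)
    (u n (inB n be), v n.+1 (iB n n.+1 be (mid n.+1))) (b_proof n be) : F p y0 n.
have b_nat : forall m n (g : mono m n) (be : B n), bmap m (sact g be) = sact g (bmap n be).
  move=> m n g be; apply: sig_eq => /=.
  rewrite !smnat; congr (_, _).
  by rewrite -smnat -natkB dinfB mcomp_id_l mcomp_id_r.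
pose b := @SMap B (F p y0) bmap b_nat.
have hsq : forall n al, q hx0 n (a n al) = b n (f n al).
  move=> n al; apply: sig_eq => /=; congr (_, _).
    by rewrite -!smnat -natkA mcomp_id_l pcomm.
  by rewrite huv hh2 hCf2.
have [h' [hh'1 hh'2]] := anod _ _ _ (q_kan rf) a b hsq.
pose kp := fun m (t : mono m 0) => sact t x0.
pose kk := fun n m (be : B n) (t : mono m n.+1) => sact t (proj1_sig (h' n be)).
have cw : is_cowedge kp kk.
  split; [|split; [|split]].
  - by move=> m m' g t; rewrite /kp sact_comp.
  - by move=> n m m' g be t; rewrite /kk sact_comp.
  - move=> k0 n g m be t; rewrite /kk (smnat h') /= sact_comp //.
  - by move=> n m be t; rewrite /kp /kk sact_comp (proj2_sig (h' n be)).
have [h [hk1 [hk2 _]]] := coneB.2 X kp kk cw.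
have h'1 : forall n be, sact (delta0 n) (proj1_sig (h' n be)) = u n (inB n be).
  by move=> n be; have := congr1 (fun s => (proj1_sig s).1) (hh'2 n be).
have h'2 : forall n be, p n.+1 (proj1_sig (h' n be)) = v n.+1 (iB n n.+1 be (mid n.+1)).
  by move=> n be; have := congr1 (fun s => (proj1_sig s).2) (hh'2 n be).
exists h; split; last first.
  move=> n x.
  have := cone_uniq coneB (cowedge_map v coneB.1) (g1 := scomp p h) (g2 := v).
  apply.
  - move=> m t; rewrite /= hk1 /kp smnat hx0 /y0 -smnat -natpB mcomp_id_l //.
  - move=> n0 m be t; rewrite /= hk2 /kk smnat h'2 -smnat -natkB mcomp_id_l //.
  - by [].
  - by [].
move=> n x.
have hC : forall m c, h m (Cf m c) = u m (inC m c).
  have := cone_uniq coneA (cowedge_map (scomp u inC) coneA.1) (g1 := scomp h Cf) (g2 := scomp u inC).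
  apply.
  - move=> m t; rewrite /= hCf1 hk1 /kp /x0 -!smnat -natpA mcomp_id_l //.
  - move=> n0 m al t; rewrite /= hCf2 hk2 /kk hh'1 /= -!smnat -natkA mcomp_id_l //.
  - by [].
  - by [].
have [k0 [_ [_ ku]]] := puniv X (scomp u inB) (scomp u inC)
  (fun n al => congr1 (u n) (pcomm n al)).
have := ku (scomp h hatCf); rewrite /= => ->.
- by rewrite (ku u).
- by move=> m be; rewrite hh1 /cone_incl hk2 /kk h'1.
- by move=> m c; rewrite hh2 hC.
Qed.
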